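(* Let $(X,\rho,\mu)$ be a $K$-doubling metric measure space, $(M,d)$ a complete metric space, $C\subseteq X$ a nonempty closed set and $f\colon C\to M$ an arbitrary function. Then there exists $\tilde f\colon X\to M$ with $\tilde f|_C=f$ and $A_f\subseteq A_{\tilde f}$.
   Context: A $K$-doubling metric measure space ($K>0$) is a triple $(X,\rho,\mu)$ where $(X,\rho)$ is a complete separable metric space and $\mu$ is a Borel-regular outer measure on $X$ with $0<\mu(B_{2r}(x))\le K\mu(B_r(x))<+\infty$ for all $x\in X$, $r>0$. For $g\colon A\to M$, $\operatorname{Lip} g(x)=\limsup_{y\in A,y\to x}d(g(y),g(x))/\rho(y,x)$ and $A_g$ is the set of accumulation points $x\in A$ of $A$ with $\operatorname{Lip} g(x)<+\infty$. *)

(* Defs.v *)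
From HB Require Import structures.
From mathcomp Require Import all_boot all_order all_algebra.
From mathcomp Require Import all_classical all_reals all_analysis.
Set Implicit Arguments. Unset Strict Implicit. Unset Printing Implicit Defensive.
Import Order.TTheory GRing.Theory Num.Theory.
Local Open Scope classical_set_scope.
Local Open Scope ring_scope.

Section MetricDefs.
Variables (R : realType) (X : Type) (rho : X -> X -> R).

Definition is_metric : Prop :=
  [/\ forall x y, 0 <= rho x y,
      forall x y, rho x y = 0 <-> x = y,
      forall x y, rho x y = rho y x &
      forall x y z, rho x z <= rho x y + rho y z].

Definition metric_complete : Prop :=
  forall u : nat -> X,
    (forall e : R, 0 < e -> exists N, forall m n, (N <= m)%N -> (N <= n)%N ->
        rho (u m) (u n) < e) ->
    exists l, forall e : R, 0 < e -> exists N, forall n, (N <= n)%N -> rho (u n) l < e.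

Definition metric_separable : Prop :=
  exists D : set X, countable D /\
    forall x (e : R), 0 < e -> exists2 y, D y & rho x y < e.

Definition mball (x : X) (r : R) : set X := [set y | rho x y < r].

Definition metric_open (U : set X) : Prop :=
  forall x, U x -> exists2 r : R, 0 < r & mball x r `<=` U.

Definition metric_closed (C : set X) : Prop := metric_open (~` C).

Definition metric_borel : set (set X) :=
  smallest (sigma_algebra setT) metric_open.

Definition borel_regular (mu : {outer_measure set X -> \bar R}) : Prop :=
  (forall B, metric_borel B -> caratheodory_measurable mu B) /\
  (forall A, exists B, [/\ metric_borel B, A `<=` B & mu B = mu A]).

Definition doubling (K : R) (mu : {outer_measure set X -> \bar R}) : Prop :=
  forall x (r : R), 0 < r ->
    [/\ (0 < mu (mball x (2 * r)))%E,
        (mu (mball x (2 * r)) <= K%:E * mu (mball x r))%E &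
        (K%:E * mu (mball x r) < +oo)%E].

Definition acc_point (A : set X) (x : X) : Prop :=
  forall e : R, 0 < e -> exists2 y, A y & 0 < rho y x < e.

End MetricDefs.

Definition doubling_mms (R : realType) (X : Type) (K : R) (rho : X -> X -> R)
  (mu : {outer_measure set X -> \bar R}) : Prop :=
  [/\ 0 < K, is_metric rho, metric_complete rho, metric_separable rho &
      (borel_regular rho mu /\ doubling rho K mu)].

Section Lip.
Variables (R : realType) (X M : Type) (rho : X -> X -> R) (d : M -> M -> R).

(* Lip g (x) = limsup_{y in A, y -> x} d(g y, g x) / rho(y, x), for g : A -> M
   (represented by a function on X of which only the values on A matter) *)
Definition Lip (A : set X) (g : X -> M) (x : X) : \bar R :=
  ereal_inf ((fun delta : R =>
      ereal_sup ((fun y => ((d (g y) (g x)) / rho y x)%:E) @`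
                 [set y | A y /\ 0 < rho y x < delta]))
    @` [set delta : R | 0 < delta]).

Definition Afin (A : set X) (g : X -> M) : set X :=
  [set x | [/\ A x, acc_point rho A x & (Lip A g x < +oo)%E]].

End Lip.

(* Main.v *)
Require Import Defs.
From HB Require Import structures.
From mathcomp Require Import all_boot all_order all_algebra.
From mathcomp Require Import all_classical all_reals all_analysis.
From mathcomp Require Import lra.
Import Order.TTheory GRing.Theory Num.Theory.
Local Open Scope classical_set_scope.
Local Open Scope ring_scope.

Lemma near_pt {R : realType} {X : Type} {rho : X -> X -> R} {C : set X} :
  is_metric rho -> C !=set0 -> metric_closed rho C ->
  forall y, exists c, C c /\ (C y -> c = y) /\ forall x, C x -> rho y c <= 2 * rho y x.
Proof.
move=> [r0 req rsym rtri] [c0 Cc0] Ccl y.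
have [Cy|nCy] := pselect (C y).
  exists y; split => //; split => // x _.
  have -> : rho y y = 0 by apply/req.
  by rewrite mulr_ge0.
have [r r0' hr] := Ccl y nCy.
set S := [set rho y c | c in C].
have S0 : S !=set0 by exists (rho y c0); exists c0.
have lbS : lbound S 0 by move=> _ [c _ <-].
have Dge : r <= inf S.
  apply: lb_le_inf => // _ [c Cc <-].
  rewrite leNgt; apply/negP => h.
  by have := hr c h.
have Dpos : 0 < inf S by apply: lt_le_trans Dge.
have [_ [c Cc <-] hc] : exists2 z, S z & z < 2 * inf S.
  by apply: inf_lt => //; rewrite mulr_natl mulr2n ltrDr.
exists c; split => //; split => [/nCy //|x Cx].
apply: (le_trans (ltW hc)); rewrite ler_pM2l //.
by apply: ge_inf; [exists 0|exists x].
Qed.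

Theorem proposition2p10 (R : realType) (X : Type) (rho : X -> X -> R)
  (mu : {outer_measure set X -> \bar R}) (K : R)
  (M : Type) (d : M -> M -> R) (C : set X) (f : X -> M) :
  doubling_mms K rho mu ->
  is_metric d -> metric_complete d ->
  C !=set0 -> metric_closed rho C ->
  exists ft : X -> M,
    (forall x, C x -> ft x = f x) /\
    Afin rho d C f `<=` Afin rho d setT ft.
Proof.
move=> [_ mr _ _ _] md _ C0 Ccl.
have [c hc] := choice (near_pt mr C0 Ccl).
have [r0 req rsym rtri] := mr.
have [d0 deq dsym dtri] := md.
exists (fun y => f (c y)); split.
  by move=> x Cx; have [_ [-> //]] := hc x.
move=> x [Cx accx Lx]; split => //.
  by move=> e e0; have [y _ hy] := accx e e0; exists y.
have [_ [delta delta0 <-] hs] := ereal_inf_lt Lx.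
set s := ereal_sup _ in hs.
set B := Num.max (fine s) 0.
have hB : forall y, C y -> 0 < rho y x < delta -> d (f y) (f x) <= B * rho y x.
  move=> y Cy /andP[ry ryd].
  have : (((d (f y) (f x)) / rho y x)%:E <= s)%E.
    by apply: ereal_sup_ubound; exists y => //; split => //; apply/andP.
  move=> hle.
  have sfin : s \is a fin_num.
    rewrite fin_numE; apply/andP; split.
      by apply/eqP => e; move: hle; rewrite e leeNy_eq.
    by rewrite lt_eqF.
  rewrite -ler_pdivrMr // le_max; apply/orP; left.
  by rewrite -lee_fin fineK.
have cx : c x = x by have [_ [-> //]] := hc x.
apply: (@le_lt_trans _ _ (ereal_sup ((fun y => ((d (f (c y)) (f (c x))) / rho y x)%:E) @`
                 [set y | setT y /\ 0 < rho y x < delta / 3]))).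
  apply: ereal_inf_lbound; exists (delta / 3) => //.
  by rewrite /= divr_gt0.
apply: (@le_lt_trans _ _ (3 * B)%:E); last by rewrite ltry.
apply: ge_ereal_sup => _ [y [_ /andP[ry ryd]] <-].
rewrite lee_fin cx ler_pdivrMr //.
have [Ccy [_ hcy]] := hc y.
have rc : rho y (c y) <= 2 * rho y x := hcy x Cx.
have rcx : rho (c y) x <= 3 * rho y x.
  apply: (le_trans (rtri _ y _)); rewrite rsym.
  by move: rc; lra.
have B0 : 0 <= B by rewrite le_max lexx orbT.
have [e|ne] := pselect (c y = x).
  rewrite e; have -> : d (f x) (f x) = 0 by apply/deq.
  by rewrite !mulr_ge0.
have rcx0 : 0 < rho (c y) x.
  rewrite lt_neqAle r0 andbT; apply/eqP => h; apply: ne; apply/req; by rewrite h.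
have rcxd : rho (c y) x < delta.
  apply: (le_lt_trans rcx); rewrite -ltr_pdivlMl //.
  by rewrite mulrC.
apply: (le_trans (hB _ Ccy _)); first by rewrite rcx0.
by rewrite (mulrC 3 B) -mulrA ler_wpM2l.
Qed.
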